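(* Let $G$ be an $n$-vertex graph with maximum degree $\Delta$ and arboricity $a$. There is a deterministic distributed algorithm in the LOCAL model that computes a proper edge coloring of $G$ with $\Delta+O(a)$ colors within $O(a\log n)$ rounds.
   Context: LOCAL model: the input graph is the communication network; each vertex is a processor with a unique ID of $O(\log n)$ bits and unbounded local computation; computation proceeds in synchronous rounds, in each of which every vertex may send a message of arbitrary size to each neighbor; running time is the number of rounds until all vertices terminate. Global parameters ($n$, $\Delta$, $a$) are known to all vertices. The arboricity of a graph is the minimum number of forests into which its edge set can be partitioned. In an edge coloring, edges sharing an endpoint receive distinct colors, and both endpoints of an edge know its color. *)

(* Defs.v *)
From mathcomp Require Import all_boot.
Set Implicit Arguments. Unset Strict Implicit. Unset Printing Implicit Defensive.

Definition simple_graph n (e : rel 'I_n) := symmetric e /\ irreflexive e.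

Definition deg n (e : rel 'I_n) (v : 'I_n) : nat := #|[set u | e v u]|.

Definition maxdeg n (e : rel 'I_n) : nat := \max_(v : 'I_n) deg e v.

Definition has_cycle n (r : rel 'I_n) : Prop :=
  exists (v : 'I_n) (p : seq 'I_n),
    [/\ uniq (v :: p), 2 <= size p, path r v p & r (last v p) v].

Definition forest_decomp n (e : rel 'I_n) (k : nat) : Prop :=
  exists f : 'I_n -> 'I_n -> nat,
    (forall u v, e u v -> f u v = f v u /\ f u v < k) /\
    (forall j, ~ has_cycle (fun u v => e u v && (f u v == j))).

Definition arboricity n (e : rel 'I_n) (a : nat) : Prop :=
  forest_decomp e a /\ forall k, forest_decomp e k -> a <= k.

(* Deterministic LOCAL algorithm (synchronous, unbounded messages, unbounded
   local computation). Each vertex starts knowing only its ID (global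
   parameters n, Delta, a are built into the algorithm, which may depend on
   them). In every round each vertex sends its message to all neighbours; a
   receiver sees the messages indexed by the sender's ID (equivalently: the
   sender includes its ID in the message). At the end a vertex outputs, for
   each neighbour ID, the colour of the corresponding incident edge. *)
Record LocalAlg := {
  St : Type;
  Msg : Type;
  init : nat -> St;
  send : St -> Msg;
  step : St -> (nat -> option Msg) -> St;
  out : St -> nat -> nat
}.

Fixpoint run (A : LocalAlg) n (e : rel 'I_n) (id : 'I_n -> nat) (r : nat)
  (v : 'I_n) : St A :=
  match r with
  | 0 => init A (id v)
  | r'.+1 =>
      step (run A e id r' v)
        (fun i => match [pick u | e v u && (id u == i)] with
                  | Some u => Some (send (run A e id r' u))
                  | None => None
                  end)
  end.

Definition edge_col (A : LocalAlg) n (e : rel 'I_n) (id : 'I_n -> nat)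
  (R : nat) (v u : 'I_n) : nat := out (run A e id R v) (id u).

Definition proper_edge_coloring n (e : rel 'I_n) (col : 'I_n -> 'I_n -> nat)
  (q : nat) : Prop :=
  [/\ forall u v, e u v -> col u v = col v u,
      forall u v, e u v -> col u v < q
    & forall u v w, e u v -> e u w -> v != w -> col u v != col u w].

(* Main.v *)
Require Import Defs.
From mathcomp Require Import all_boot zify.
Set Implicit Arguments. Unset Strict Implicit. Unset Printing Implicit Defensive.
Set Warnings "-notation-overridden".

Lemma card_sum (T : finType) (S : {set T}) (P : pred T) :
  #|[set u in S | P u]| = \sum_(u in S) (P u : nat).
Proof.
rewrite -sum1_card [RHS]big_mkcond /= [LHS]big_mkcond /=.
apply: eq_bigr => u _; rewrite !inE; by case: (u \in S); case: (P u).
Qed.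

Lemma split_at (T : eqType) (w : T) s : w \in s ->
  s = take (index w s) s ++ w :: drop (index w s).+1 s.
Proof.
move=> win; have hi : index w s < size s by rewrite index_mem.
by rewrite -{1}(cat_take_drop (index w s) s) (drop_nth w hi) nth_index.
Qed.

Lemma last_at (T : eqType) (x0 w : T) s : w \in s ->
  last x0 s = last w (drop (index w s).+1 s).
Proof. by move=> win; rewrite {1}(split_at win) last_cat. Qed.

Section Comb.
Variable n : nat.
Variable r : rel 'I_n.
Hypothesis rsym : symmetric r.
Hypothesis rirr : irreflexive r.
Hypothesis racyc : ~ has_cycle r.

Lemma cycle_from (v : 'I_n) p w : uniq (v::p) -> path r v p -> w \in v::p ->
  r (last v p) w -> 2 <= size (drop (index w (v::p)).+1 (v::p)) -> False.
Proof.
move=> U P win rlw sz; apply: racyc.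
set s := v :: p in U P win rlw sz *.
have E := split_at win.
exists w, (drop (index w s).+1 s); split => //.
- by move: U; rewrite {1}E cat_uniq => /and3P[].
- have : sorted r s by [].
  by rewrite {1}E => /cat_sorted2 [].
- by rewrite -(last_at v win).
Qed.

Lemma long_path (S : {set 'I_n}) :
  (forall x, x \in S -> 1 < #|[set u in S | r x u]|) -> S != set0 ->
  forall k, exists v p, [/\ uniq (v::p), path r v p,
     (forall x, x \in v::p -> x \in S) & size p = k].
Proof.
move=> H2 /set0Pn [x0 x0S]; elim=> [|k [v [p [U P A sz]]]].
  exists x0, [::]; split => //; by move=> x; rewrite inE => /eqP ->.
set z := last v p.
have zS : z \in S by apply: A; rewrite /z; apply: mem_last.
have [w1 [w2 [w1i w2i w12]]] := card_gt1P (H2 _ zS).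
move: w1i w2i; rewrite !inE => /andP[w1S rz1] /andP[w2S rz2].
have ext : forall w, w \in S -> r z w -> w \notin v :: p -> exists v0 p0,
  [/\ uniq (v0::p0), path r v0 p0, (forall x, x \in v0::p0 -> x \in S) & size p0 = k.+1].
  move=> w wS rzw wn; exists v, (rcons p w); split.
  - by rewrite -rcons_cons rcons_uniq wn U.
  - by rewrite rcons_path P rzw.
  - by move=> x; rewrite -rcons_cons mem_rcons inE => /orP[/eqP->|]; [|apply: A].
  - by rewrite size_rcons sz.
case: (boolP (w1 \in v :: p)) => [in1|]; last by apply: ext.
case: (boolP (w2 \in v :: p)) => [in2|]; last by apply: ext.
exfalso.
set s := v :: p in in1 in2.
have small : forall w, w \in s -> r z w -> size (drop (index w s).+1 s) = 1.
  move=> w win rzw.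
  have : ~ 2 <= size (drop (index w s).+1 s) by move=> h; apply: (cycle_from U P win rzw h).
  have wz : w != z by apply/eqP => wz; move: rzw; rewrite wz rirr.
  have hi : index w s < size s by rewrite index_mem.
  case E : (drop (index w s).+1 s) => [|y q] //=; last by case: q E => //= ? ? ? /(_ isT).
  move=> _; exfalso.
  have := last_at v win; rewrite E /= => ezw.
  by move: wz; rewrite -ezw eqxx.
have := small _ in1 rz1; have := small _ in2 rz2.
rewrite !size_drop => e2 e1.
have hi1 : index w1 s < size s by rewrite index_mem.
have hi2 : index w2 s < size s by rewrite index_mem.
have ei : index w1 s = index w2 s.
  move: e1 e2 hi1 hi2; move: (index w1 s) (index w2 s) (size s) => i1 i2 m; lia.
move: w12; rewrite -(nth_index w1 in1) -(nth_index w1 in2) ei eqxx //.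
Qed.

Lemma leaf (S : {set 'I_n}) : S != set0 ->
  exists2 x, x \in S & #|[set u in S | r x u]| <= 1.
Proof.
move=> S0.
case: (boolP [exists x in S, #|[set u in S | r x u]| <= 1]).
  by move=> /existsP [x /andP [xS h]]; exists x.
move=> /existsPn H.
have H2 : forall x, x \in S -> 1 < #|[set u in S | r x u]|.
  move=> x xS; move: (H x); rewrite xS /=; by rewrite ltnNge.
have [v [p [U _ _ sz]]] := long_path H2 S0 n.
have := card_uniqP U; move=> /= hc.
have := max_card (mem (v :: p)); rewrite hc card_ord /= sz; lia.
Qed.

Definition Tdeg (S : {set 'I_n}) := \sum_(v in S) #|[set u in S | r v u]|.

Lemma Tdeg_bound k (S : {set 'I_n}) : #|S| = k -> Tdeg S <= 2 * k.-1.
Proof.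
elim: k S => [|k IH] S cS.
  by move: cS => /eqP; rewrite cards_eq0 => /eqP ->; rewrite /Tdeg big_set0.
have S0 : S != set0 by rewrite -card_gt0 cS.
have [x xS dx] := leaf S0.
set S' := S :\ x.
have cS' : #|S'| = k by move: cS; rewrite (cardsD1 x) xS add1n => -[].
have dsplit : forall v, #|[set u in S | r v u]| = r v x + #|[set u in S' | r v u]|.
  move=> v; rewrite (cardsD1 x) inE xS /=; congr (_ + _).
  by apply: eq_card => u; rewrite !inE; case: (u == x); case: (u \in S).
have sx : \sum_(v in S') (r v x : nat) = #|[set u in S' | r x u]|.
  rewrite card_sum; apply: eq_bigr => v _; by rewrite rsym.
have : Tdeg S = #|[set u in S | r x u]| + (#|[set u in S' | r x u]| + Tdeg S').
  rewrite /Tdeg (big_setD1 x xS) /= -/S'; congr (_ + _).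
  rewrite -sx -big_split /=; apply: eq_bigr => v _; by rewrite dsplit.
have := dsplit x; rewrite rirr add0n => <- ->.
have := IH _ cS'.
case: k {IH} cS cS' => [|k] cS cS'.
  have -> : #|[set u in S | r x u]| = 0.
    apply/eqP; rewrite cards_eq0; apply/eqP/setP => u; rewrite !inE.
    case: (boolP (u \in S)) => // uS /=.
    have h : u \in S' -> False.
      by move: cS' => /eqP; rewrite cards_eq0 => /eqP ->; rewrite inE.
    move: h; rewrite !inE uS andbT => h.
    by case: (eqVneq u x) => [->|/h //]; rewrite rirr.
  lia.
lia.
Qed.

End Comb.

Section Halve.
Variables (n a : nat) (e : rel 'I_n) (f : 'I_n -> 'I_n -> nat).
Hypotheses (se : simple_graph e) (hf : forall u v, e u v -> f u v = f v u /\ f u v < a)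
  (hac : forall j, ~ has_cycle (fun u v => e u v && (f u v == j))).

Lemma sum_deg_bound (S : {set 'I_n}) :
  \sum_(v in S) #|[set u in S | e v u]| <= a * (2 * (#|S|).-1).
Proof.
have step : forall v, #|[set u in S | e v u]| <=
    \sum_(j < a) #|[set u in S | e v u && (f v u == j)]|.
  move=> v; rewrite card_sum.
  rewrite (eq_bigr (fun j : 'I_a => \sum_(u in S) (e v u && (f v u == j) : nat)));
    last by move=> j _; rewrite card_sum.
  rewrite exchange_big /=; apply: leq_sum => u _.
  case evu: (e v u) => //=.
  have [_ lt] := hf evu.
  by rewrite (bigD1 (Ordinal lt)) //= eqxx.
have h : \sum_(v in S) #|[set u in S | e v u]| <=
   \sum_(v in S) \sum_(j < a) #|[set u in S | e v u && (f v u == j)]|.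
  by apply: leq_sum => v _; apply: step.
apply: (leq_trans h).
rewrite exchange_big /=.
have -> : a * (2 * (#|S|).-1) = \sum_(j < a) (2 * (#|S|).-1).
  by rewrite sum_nat_const card_ord.
apply: leq_sum => j _.
have sy : symmetric (fun u v => e u v && (f u v == j)).
  move=> u v /=; case: se => sy _; rewrite sy.
  case evu: (e v u) => //=; by have [-> _] := hf evu.
have ir : irreflexive (fun u v => e u v && (f u v == j)).
  move=> u /=; case: se => _ ir; by rewrite ir.
have := (@Tdeg_bound n _ sy ir (@hac j) #|S| S erefl); rewrite /Tdeg; apply.
Qed.

Lemma halve (S : {set 'I_n}) :
  2 * #|[set v in S | 4 * a < #|[set u in S | e v u]|]| <= #|S|.
Proof.
have h1 := sum_deg_bound S.
have h2 : #|[set v in S | 4 * a < #|[set u in S | e v u]|]| * (4 * a).+1 <=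
          \sum_(v in S) #|[set u in S | e v u]|.
  rewrite card_sum big_distrl /=; apply: leq_sum => v _.
  by case: ltnP => h //=; rewrite mul1n.
have := leq_trans h2 h1.
move: (#|[set v in S | _]|) (#|S|) => R s; nia.
Qed.
End Halve.

Definition mex (s : seq nat) := find (fun x => x \notin s) (iota 0 (size s).+1).

Lemma mex_has s : has (fun x => x \notin s) (iota 0 (size s).+1).
Proof.
case: (boolP (has _ _)) => // /hasPn H.
have sub : {subset iota 0 (size s).+1 <= s}.
  by move=> x /H /negPn.
have := uniq_leq_size (iota_uniq 0 (size s).+1) sub; rewrite size_iota; lia.
Qed.

Lemma mex_notin s : mex s \notin s.
Proof.
have := nth_find 0 (mex_has s); rewrite -/(mex s) nth_iota //.
have := find_size (fun x => x \notin s) (iota 0 (size s).+1).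
rewrite size_iota -/(mex s) leq_eqVlt => /orP[/eqP E|//].
exfalso; have := mex_has s; by rewrite has_find size_iota -/(mex s) E ltnn.
Qed.

Lemma mex_le s : mex s <= size s.
Proof.
have := mex_has s; rewrite has_find size_iota ltnS; apply.
Qed.

Definition bit (x b : nat) := odd (x %/ 2 ^ b).

Lemma bits_eq B x y : x < 2 ^ B -> y < 2 ^ B -> (forall b, b < B -> bit x b = bit y b) -> x = y.
Proof.
elim: B x y => [|B IH] x y.
  by rewrite expn0 !ltnS !leqn0 => /eqP -> /eqP ->.
move=> hx hy hb.
have h0 := hb 0 isT; rewrite /bit expn0 !divn1 in h0.
have : x %/ 2 = y %/ 2.
  apply: IH.
  - by rewrite ltn_divLR // -expnSr.
  - by rewrite ltn_divLR // -expnSr.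
  move=> b bB; have := hb b.+1 bB; by rewrite /bit expnS -!divnMA.
move=> e2.
rewrite -(odd_double_half x) -(odd_double_half y) -!divn2 e2 h0 //.
Qed.

Section Algo.
Variables (n Delta a c : nat).
Definition NN := n ^ c.
Definition dd := 4 * a.
Definition LL := (trunc_log 2 n).+1.
Definition BB := c * LL.
Definition P1 := LL.+1.
Definition Stot := BB * dd + LL * dd.
Definition Rtot := P1 + 2 * Stot.

Record stt := MkS { sid : nat; cnt : nat; snb : nat -> bool; slay : nat;
  snbl : nat -> nat; scol : nat -> option nat }.

Definition usedc (cl : nat -> option nat) := pmap cl (iota 0 NN).
Definition nth_opt (j : nat) (l : seq nat) :=
  if j < size l then Some (nth 0 l j) else None.
Definition lowb (x y : nat) := find (fun b => bit x b != bit y b) (iota 0 BB).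

Definition tgt (s : nat) (t : stt) : option nat :=
  if s < BB * dd then
    if ~~ bit (sid t) (s %/ dd) then
      nth_opt (s %% dd) [seq i <- iota 0 NN | snb t i && (snbl t i == slay t)
                                         && (lowb (sid t) i == s %/ dd)]
    else None
  else
    if ((s - BB * dd) %/ dd < LL) && (slay t == LL - (s - BB * dd) %/ dd) then
      nth_opt ((s - BB * dd) %% dd)
        [seq i <- iota 0 NN | snb t i && (LL - (s - BB * dd) %/ dd < snbl t i)]
    else None.

Definition assign (g : nat -> seq nat) (cl : nat -> option nat) (i : nat) :
  nat -> option nat :=
  fun j => if j == i then Some (mex (usedc cl ++ g i)) else cl j.

Definition tails s (t : stt) (M : nat -> option stt) :=
  [seq i <- iota 0 NN | if M i is Some t' then
      (tgt s t' == Some (sid t)) && (scol t i == None) else false].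

Definition gof (M : nat -> option stt) i :=
  if M i is Some t' then usedc (scol t') else [::].

Definition choose s (t : stt) (M : nat -> option stt) :=
  foldl (assign (gof M)) (scol t) (tails s t M).

Definition copy (t : stt) (M : nat -> option stt) : nat -> option nat :=
  fun i => if scol t i is Some x then Some x
           else if M i is Some t' then scol t' (sid t) else None.

Definition alivecnt (M : nat -> option stt) :=
  count (fun i => if M i is Some t' then slay t' == 0 else false) (iota 0 NN).

Definition stepf (t : stt) (M : nat -> option stt) : stt :=
  MkS (sid t) (cnt t).+1 (fun i => isSome (M i))
    (if (slay t == 0) && (cnt t < LL) && (alivecnt M <= dd) then (cnt t).+1
     else slay t)
    (fun i => if M i is Some t' then slay t' else 0)
    (if cnt t < P1 then scol t
     else if odd (cnt t - P1) then copy t M else choose ((cnt t - P1)./2) t M).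

Definition outf (t : stt) (i : nat) := if scol t i is Some x then x else 0.

Definition Alg : LocalAlg :=
  {| St := stt; Msg := stt;
     init := fun i => MkS i 0 (fun _ => false) 0 (fun _ => 0) (fun _ => None);
     send := fun t => t; step := stepf; out := outf |}.

Lemma fold_spec g l cl0 : uniq l -> (forall j, j \in l -> j < NN) ->
  let cl := foldl (assign g) cl0 l in
  [/\ forall j, j \notin l -> cl j = cl0 j,
      forall j, cl0 j != None -> cl j != None &
      forall j, j \in l -> exists x, [/\ cl j = Some x, x \notin g j,
        x <= count (fun i => cl i != None) (iota 0 NN) + size (g j) &
        forall j', j' < NN -> j' != j -> cl j' != Some x]].
Proof.
elim: l cl0 => [|i l IH] cl0 /=.
  by move=> _ _; split.
move=> /andP [il ul] hl.
have hl' : forall j, j \in l -> j < NN by move=> j jl; apply: hl; rewrite inE jl orbT.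
have [F1 F0 F2] := IH (assign g cl0 i) ul hl'.
set cl := foldl _ _ l in F1 F0 F2 *.
set x0 := mex (usedc cl0 ++ g i).
have cli : cl i = Some x0 by rewrite F1 // /assign eqxx.
have mono : forall j, cl0 j != None -> cl j != None.
  move=> j hj; apply: F0; rewrite /assign; by case: (j == i).
have x0n : forall j, j < NN -> cl0 j != Some x0.
  move=> j jN; apply/eqP => E; have := mex_notin (usedc cl0 ++ g i).
  rewrite -/x0 mem_cat; apply/negP/negPn/orP; left.
  rewrite /usedc mem_pmap; apply/mapP; exists j => //; by rewrite mem_iota.
split.
- move=> j; rewrite inE negb_or => /andP [ji jl]; by rewrite F1 // /assign (negbTE ji).
- exact: mono.
move=> j; rewrite inE => /orP [/eqP ->|jl]; last by apply: F2.
exists x0; split => //.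
- by have := mex_notin (usedc cl0 ++ g i); rewrite -/x0 mem_cat negb_or => /andP [].
- apply: (leq_trans (mex_le _)); rewrite size_cat leq_add2r /usedc size_pmap.
  apply: sub_count => k /=; case E: (cl0 k) => [y|] //= _; apply: mono; by rewrite E.
- move=> j' j'N j'i.
  case: (boolP (j' \in l)) => j'l.
    have [x [E _ _ D]] := F2 _ j'l; rewrite E; apply/eqP => -[ex].
    have := D i (hl i (mem_head _ _)); rewrite eq_sym j'i cli ex eqxx; by move/(_ isT).
  by rewrite F1 // /assign (negbTE j'i); apply: x0n.
Qed.


Variables (e : rel 'I_n) (id : 'I_n -> nat).
Hypotheses (se : simple_graph e) (idinj : injective id) (idb : forall v, id v < NN)
  (mdeg : maxdeg e = Delta) (fd : forest_decomp e a) (apos : 0 < a).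

Local Notation S k v := (run Alg e id k v).

Definition msg k (v : 'I_n) : nat -> option stt :=
  fun i => match [pick u | e v u && (id u == i)] with
           | Some u => Some (S k u) | None => None end.

Lemma runS k v : S k.+1 v = stepf (S k v) (msg k v).
Proof. by []. Qed.

Lemma msg_nb k v u : e v u -> msg k v (id u) = Some (S k u).
Proof.
rewrite /msg; case: pickP => [x /andP [evx /eqP ex]|H] evu.
  by rewrite (idinj ex).
by move: (H u); rewrite evu eqxx.
Qed.

Lemma msg_some k v i t : msg k v i = Some t -> exists u, [/\ e v u, id u = i & t = S k u].
Proof.
rewrite /msg; case: pickP => [x /andP [evx /eqP ex]|H] //= [<-].
by exists x.
Qed.

Lemma msg_none k v i : msg k v i = None -> forall u, e v u -> id u != i.
Proof.
move=> E u evu; apply/eqP => ei; by move: E; rewrite -ei msg_nb.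
Qed.

Lemma sid_run k v : sid (S k v) = id v.
Proof. by elim: k => //= k ->. Qed.

Lemma cnt_run k v : cnt (S k v) = k.
Proof. by elim: k => //= k ->. Qed.

Definition isnb v i := [exists u, e v u && (id u == i)].

Lemma count_ids (P : pred 'I_n) :
  count (fun i => [exists u, P u && (id u == i)]) (iota 0 NN) = #|[set u | P u]|.
Proof.
set s := [seq id u | u <- enum [set u | P u]].
have us : uniq s by rewrite map_inj_uniq // enum_uniq.
have -> : #|[set u | P u]| = size s by rewrite size_map -cardE.
rewrite -size_filter; apply: perm_size; apply: uniq_perm => //.
  by apply: filter_uniq; apply: iota_uniq.
move=> i; rewrite mem_filter mem_iota /=.
apply/andP/mapP.
  move=> [/existsP [u /andP [pu /eqP <-]] _]; exists u => //; by rewrite mem_enum inE.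
move=> [u]; rewrite mem_enum inE => pu ->; split; last by rewrite add0n idb.
by apply/existsP; exists u; rewrite pu eqxx.
Qed.

Lemma exists_msg k v i (P : pred 'I_n) :
  [exists u, (e v u && P u) && (id u == i)] =
  (if msg k v i is Some t then [exists u, (e v u && P u) && (id u == i)] else false).
Proof.
case E: (msg k v i) => [t|] //.
apply/negbTE/existsPn => u; apply/negP => /andP [/andP [evu _] /eqP ei].
by move: (msg_none E evu); rewrite ei eqxx.
Qed.

Definition lay k v := slay (S k v).
Definition lf v := lay LL v.

Lemma lay_step k v : lay k.+1 v =
  if (lay k v == 0) && (k < LL) && (alivecnt (msg k v) <= dd) then k.+1 else lay k v.
Proof. by rewrite /lay runS /= cnt_run. Qed.

Lemma alivecnt_eq k v : alivecnt (msg k v) = #|[set u | e v u && (lay k u == 0)]|.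
Proof.
rewrite /alivecnt -count_ids; apply: eq_count => i.
case E: (msg k v i) => [t|].
  have [u [evu ei ->]] := msg_some E.
  apply/idP/existsP.
    by move=> h; exists u; rewrite evu ei eqxx andbT.
  move=> [u' /andP [/andP [evu' l] /eqP ei']].
  by move: l; rewrite /lay (idinj (etrans ei' (esym ei))).
apply/esym/negbTE/existsPn => u; apply/negP => /andP [/andP [evu _] /eqP ei].
by move: (msg_none E evu); rewrite ei eqxx.
Qed.

Lemma lay_le k v : lay k v <= k.
Proof.
elim: k => [|k IH]; first by rewrite /lay.
rewrite lay_step; case: ifP => // _; exact: leq_trans IH _.
Qed.

Lemma lay_keep k m v : k <= m -> lay k v != 0 -> lay m v = lay k v.
Proof.
move=> km nz; elim: m km => [|m IH]; first by rewrite leqn0 => /eqP ->.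
rewrite leq_eqVlt => /orP [/eqP <-|]; first by [].
rewrite ltnS => /IH E; rewrite lay_step E (negbTE nz).
by [].
Qed.

Lemma lay_zero k m v : k <= m -> lay k v = 0 -> lay m v = 0 \/ k < lay m v.
Proof.
move=> km z; elim: m km => [|m IH]; first by rewrite leqn0 => /eqP E; subst k; left.
rewrite leq_eqVlt => /orP [/eqP <-|]; first by left.
rewrite ltnS => km1; case: (IH km1) => E; rewrite lay_step.
  rewrite E eqxx /=; case: ifP => _; [right; lia | by left].
rewrite (_ : (lay m v == 0) = false) /=; last by apply/negbTE; lia.
by right.
Qed.

Lemma lay_frozen m v : LL <= m -> lay m v = lf v.
Proof.
elim: m => [|m IH]; first by rewrite leqn0 => /eqP <-.
rewrite leq_eqVlt => /orP [/eqP <-|]; first by [].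
rewrite ltnS => h; rewrite lay_step (IH h).
by rewrite (_ : (m < LL) = false) ?andbF //; apply/negbTE; lia.
Qed.

Lemma lay_char k v : k <= LL -> (lay k v == 0) = (lf v == 0) || (k < lf v).
Proof.
move=> kL; case: (eqVneq (lay k v) 0) => [z|nz].
  by rewrite /lf; case: (lay_zero kL z) => [->|h]; rewrite ?eqxx // h orbT.
rewrite /lf (lay_keep kL nz) (negbTE nz) /=; apply/esym/negbTE.
by rewrite -leqNgt lay_le.
Qed.

Definition Aset k := [set v | lay k v == 0].

Lemma A_step k : k < LL -> Aset k.+1 = [set v in Aset k | dd < #|[set u in Aset k | e v u]|].
Proof.
move=> kL; apply/setP => v; rewrite !inE lay_step kL andbT alivecnt_eq.
have -> : #|[set u | e v u && (lay k u == 0)]| = #|[set u in Aset k | e v u]|.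
  by apply: eq_card => u; rewrite !inE andbC.
case E: (lay k v == 0) => /=; last by rewrite E.
rewrite (eqP E); by case: leqP.
Qed.

Lemma A_card k : k <= LL -> #|Aset k| * 2 ^ k <= n.
Proof.
have [f [hf hac]] := fd.
elim: k => [|k IH] kL.
  by rewrite expn0 muln1; have := max_card (mem (Aset 0)); rewrite card_ord.
have := IH (ltnW kL); rewrite (A_step kL) expnS.
have := halve se hf hac (Aset k); rewrite -/dd.
set x := #|_|; set y := #|_|; move=> h1 h2.
apply: leq_trans h2; rewrite mulnCA mulnA leq_mul2r; apply/orP; right; lia.
Qed.

Lemma lf_pos v : 0 < lf v.
Proof.
have := A_card (leqnn LL).
have := trunc_log_ltn n (isT : 1 < 2); rewrite -/LL => h1 h2.
have : #|Aset LL| = 0.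
  case: #|Aset LL| h2 => // m; rewrite mulSn; lia.
move/eqP; rewrite cards_eq0 => /eqP E.
have : v \notin Aset LL by rewrite E inE.
by rewrite inE /lf lt0n.
Qed.

Lemma lf_le v : lf v <= LL.
Proof. exact: lay_le. Qed.

Lemma updeg v : #|[set u | e v u && (lf v <= lf u)]| <= dd.
Proof.
set k := (lf v).-1.
have hk : k < LL by have := lf_pos v; have := lf_le v; rewrite /k; lia.
have vA : v \in Aset k.
  rewrite inE lay_char ?(ltnW hk) //; have := lf_pos v; rewrite /k; lia.
have vA' : v \notin Aset k.+1.
  rewrite inE lay_char //; have := lf_pos v; rewrite /k; lia.
move: vA'; rewrite (A_step hk) inE vA /= -leqNgt.
apply: leq_trans; apply: subset_leq_card; apply/subsetP => u; rewrite !inE.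
move=> /andP [-> h]; rewrite lay_char ?(ltnW hk) // andbT.
have := lf_pos v; rewrite /k; lia.
Qed.


Lemma slay_post k v : LL <= k -> slay (S k v) = lf v.
Proof. exact: lay_frozen. Qed.

Lemma nbpred k v i (Q : nat -> bool) : P1 <= k ->
  snb (S k v) i && Q (snbl (S k v) i) = [exists u, (e v u && Q (lf u)) && (id u == i)].
Proof.
case: k => // k; rewrite /P1 ltnS => kL; rewrite runS /=.
rewrite (exists_msg k v i (fun u => Q (lf u))).
case E: (msg k v i) => [t|] //=.
have [u [evu ei ->]] := msg_some E.
rewrite (slay_post u kL); apply/idP/existsP.
  by move=> h; exists u; rewrite evu h ei eqxx.
move=> [u' /andP [/andP [evu' q] /eqP ei']].
by rewrite -(idinj (etrans ei' (esym ei))).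
Qed.

Lemma NN_le : NN <= 2 ^ BB.
Proof.
rewrite /NN /BB mulnC expnM.
case: c => [|c']; first by [].
rewrite leq_exp2r //; apply: ltnW; exact: trunc_log_ltn.
Qed.

Lemma lowb_sym x y : lowb x y = lowb y x.
Proof. by apply: eq_find => b; rewrite eq_sym. Qed.

Lemma lowb_diff x y : x < NN -> y < NN -> x != y ->
  lowb x y < BB /\ bit x (lowb x y) != bit y (lowb x y).
Proof.
move=> hx hy xy.
have H : has (fun b => bit x b != bit y b) (iota 0 BB).
  case: (boolP (has _ _)) => // /hasPn H; exfalso; move: xy => /eqP; apply.
  apply: (@bits_eq BB); try exact: leq_trans NN_le.
  move=> b bB; apply/eqP/negPn; apply: H; by rewrite mem_iota.
have hf : lowb x y < BB by move: H; rewrite has_find size_iota.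
split => //.
have := nth_find 0 H; rewrite nth_iota ?add0n //.
Qed.

Definition TG s v := tgt s (S P1 v).

Lemma TG_intra s v i : s < BB * dd -> TG s v = Some i ->
  exists u, [/\ e v u, id u = i, lf u = lf v, ~~ bit (id v) (s %/ dd)
                & lowb (id v) (id u) = s %/ dd].
Proof.
move=> hs; rewrite /TG /tgt hs sid_run (slay_post v (leqnSn _)).
case: ifP => // hb; rewrite /nth_opt; case: ifP => // hj [<-].
have := mem_nth 0 hj; rewrite mem_filter => /andP [/andP [h1 h3] _].
move: h1; rewrite (nbpred _ _ (fun x => x == lf v) (leqnn _)).
move=> /existsP [u /andP [/andP [evu /eqP lu] /eqP iu]].
exists u; split => //; by rewrite iu; apply/eqP.
Qed.

Lemma TG_cross s v i : BB * dd <= s -> TG s v = Some i ->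
  exists u, [/\ e v u, id u = i, (s - BB * dd) %/ dd < LL,
     lf v = LL - (s - BB * dd) %/ dd & lf v < lf u].
Proof.
move=> hs; rewrite /TG /tgt (_ : (s < BB * dd) = false); last by apply/negbTE; rewrite -leqNgt.
rewrite (slay_post v (leqnSn _)).
case: ifP => // /andP [hq /eqP hl]; rewrite /nth_opt; case: ifP => // hj [<-].
have := mem_nth 0 hj; rewrite mem_filter => /andP [h1 _].
move: h1; rewrite (nbpred _ _ (fun x => LL - (s - BB * dd) %/ dd < x) (leqnn _)).
move=> /existsP [u /andP [/andP [evu lu] /eqP iu]].
by exists u; rewrite iu hl.
Qed.

Lemma TG_nb s v i : TG s v = Some i -> exists u, e v u /\ id u = i.
Proof.
case: (ltnP s (BB * dd)) => hs h.
  by have [u [? ? _ _ _]] := TG_intra hs h; exists u.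
by have [u [? ? _ _ _]] := TG_cross hs h; exists u.
Qed.

Lemma D1 s v u : TG s v = Some (id u) -> TG s u = None.
Proof.
case: (ltnP s (BB * dd)) => hs h.
  have [u' [evu iu lu hb lb]] := TG_intra hs h; move: lb; rewrite (idinj iu) => lb.
  have uv : id v != id u by apply/eqP => /idinj E; move: evu; rewrite E (idinj iu); case: se => _ ->.
  have [_ db] := lowb_diff (idb v) (idb u) uv.
  rewrite /TG /tgt hs sid_run.
  move: db; rewrite lb; move: hb; by case: (bit (id v) _); case: (bit (id u) _).
have [u' [evu iu hq hl hlt]] := TG_cross hs h; move: hlt; rewrite (idinj iu) => hlt.
rewrite /TG /tgt (_ : (s < BB * dd) = false); last by apply/negbTE; rewrite -leqNgt.
rewrite (slay_post u (leqnSn _)) (_ : (lf u == _) = false) ?andbF //.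
apply/negbTE; lia.
Qed.

Lemma timing s s' v u w : TG s v = Some (id u) -> s' < s -> e v w ->
  (TG s' v = Some (id w) \/ TG s' w = Some (id v)) -> lf v <= lf w.
Proof.
move=> hv ss evw [h|h].
  case: (ltnP s' (BB * dd)) => hs.
    have [w' [_ iw lw _ _]] := TG_intra hs h; by rewrite -(idinj iw) lw.
  have [w' [_ iw _ _ lt]] := TG_cross hs h; rewrite -(idinj iw); exact: ltnW.
case: (ltnP s' (BB * dd)) => hs.
  have [w' [_ iw lw _ _]] := TG_intra hs h; by rewrite (idinj iw) in lw; rewrite lw.
have [v' [_ iv hq' hl' lt']] := TG_cross hs h; rewrite (idinj iv) in lt'.
case: (ltnP s (BB * dd)) => hs2; first by lia.
have [u' [_ _ hq hl _]] := TG_cross hs2 hv.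
have : (s' - BB * dd) %/ dd <= (s - BB * dd) %/ dd by apply: leq_div2r; lia.
lia.
Qed.

Lemma filter_size_dd x (Q : nat -> bool) (R : nat -> bool) :
  (forall u, e x u -> Q (lf u) -> lf x <= lf u) ->
  size [seq i <- iota 0 NN | snb (S P1 x) i && Q (snbl (S P1 x) i) && R i] <= dd.
Proof.
move=> hQ; rewrite size_filter.
apply: leq_trans (updeg x).
rewrite -count_ids; apply: sub_count => i /=.
rewrite (nbpred _ _ Q (leqnn _)) => /andP [/existsP [u /andP [/andP [evu q] iu]] _].
apply/existsP; exists u; by rewrite evu iu (hQ _ evu q).
Qed.

Lemma cover_dir x y : e x y ->
  (lf x < lf y \/ (lf x = lf y /\ ~~ bit (id x) (lowb (id x) (id y)))) ->
  exists s, s < Stot /\ TG s x = Some (id y).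
Proof.
move=> exy [lt|[eq hb]].
  set q := LL - lf x.
  set l := [seq i <- iota 0 NN | snb (S P1 x) i && (lf x < snbl (S P1 x) i)].
  have yl : id y \in l.
    rewrite mem_filter mem_iota leq0n add0n idb andbT.
    rewrite (nbpred _ _ (fun z => lf x < z) (leqnn _)).
    by rewrite andbT; apply/existsP; exists y; rewrite exy eqxx /= andbT.
  have sl : size l <= dd.
    rewrite size_filter; apply: leq_trans (updeg x).
    rewrite -count_ids; apply: sub_count => i /=.
    rewrite (nbpred _ _ (fun z => lf x < z) (leqnn _)).
    move=> /existsP [u /andP [/andP [evu q1] iu]].
    by apply/existsP; exists u; rewrite evu iu andbT /= ltnW.
  set j := index (id y) l.
  have hj : j < size l by rewrite index_mem.
  have qL : q < LL by have := lf_pos x; have := lf_le x; rewrite /q; lia.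
  exists (BB * dd + (q * dd + j)); split.
    rewrite /Stot ltn_add2l.
    have : q * dd + dd <= LL * dd by rewrite -mulSnr leq_mul2r qL orbT.
    lia.
  have dpos : 0 < dd by rewrite /dd; lia.
  rewrite /TG /tgt (_ : (_ < BB * dd) = false); last by apply/negbTE; lia.
  rewrite addKn divnMDl // divn_small ?addn0; last by lia.
  rewrite modnMDl modn_small; last by lia.
  rewrite qL (slay_post x (leqnSn _)) /q subKn ?lf_le // eqxx ?andbT.
  by rewrite /nth_opt -/l hj nth_index.
have dpos : 0 < dd by rewrite /dd; lia.
have xy : id x != id y.
  by apply/eqP => /idinj E; move: exy; rewrite E; case: se => _ ->.
have [bl _] := lowb_diff (idb x) (idb y) xy.
set b := lowb (id x) (id y) in bl hb.
set l := [seq i <- iota 0 NN | snb (S P1 x) i && (snbl (S P1 x) i == slay (S P1 x))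
                                && (lowb (id x) i == b)].
have yl : id y \in l.
  rewrite mem_filter mem_iota leq0n add0n idb (slay_post x (leqnSn _)) /b eqxx !andbT.
  rewrite (nbpred _ _ (fun z => z == lf x) (leqnn _)).
  rewrite ?andbT; apply/existsP; exists y; by rewrite exy eq !eqxx.
have sl : size l <= dd.
  rewrite /l (slay_post x (leqnSn _)) size_filter; apply: leq_trans (updeg x).
  rewrite -count_ids; apply: sub_count => i /= /andP [h _]; move: h.
  rewrite (nbpred _ _ (fun z => z == lf x) (leqnn _)).
  move=> /existsP [u /andP [/andP [evu /eqP q1] iu]].
  by apply/existsP; exists u; rewrite evu iu andbT /= q1.
set j := index (id y) l.
have hj : j < size l by rewrite index_mem.
exists (b * dd + j); split.
  have : b * dd + dd <= BB * dd by rewrite -mulSnr leq_mul2r bl orbT.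
  rewrite /Stot; lia.
have hs : b * dd + j < BB * dd.
  have : b * dd + dd <= BB * dd by rewrite -mulSnr leq_mul2r bl orbT.
  lia.
rewrite /TG /tgt hs.
rewrite divnMDl // divn_small ?addn0; last by lia.
rewrite modnMDl modn_small; last by lia.
by rewrite sid_run hb /nth_opt -/l hj nth_index.
Qed.

Lemma cover v w : e v w -> exists s, s < Stot /\
  (TG s v = Some (id w) \/ TG s w = Some (id v)).
Proof.
move=> evw.
have ewv : e w v by case: se => sy _; rewrite sy.
case: (ltngtP (lf v) (lf w)) => h.
- have [s [? ?]] := cover_dir evw (or_introl h); by exists s; split => //; left.
- have [s [? ?]] := cover_dir ewv (or_introl h); by exists s; split => //; right.
have vw : id v != id w.
  by apply/eqP => /idinj E; move: evw; rewrite E; case: se => _ ->.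
have [_ db] := lowb_diff (idb v) (idb w) vw.
case hb: (bit (id v) (lowb (id v) (id w))).
  have hb' : ~~ bit (id w) (lowb (id w) (id v)) by move: db; rewrite hb (lowb_sym (id v) (id w)); by case: (bit _ _).
  have [s [? ?]] := cover_dir ewv (or_intror (conj (esym h) hb')); by exists s; split => //; right.
have [s [? ?]] := cover_dir evw (or_intror (conj h (negbT hb))); by exists s; split => //; left.
Qed.


Lemma tgt_post k s v : P1 <= k -> tgt s (S k v) = TG s v.
Proof.
move=> hk; have hk' : LL <= k by apply: ltnW.
rewrite /TG /tgt !sid_run (slay_post v hk') (slay_post v (leqnSn _)).
case: ifP => _.
  case: ifP => // _; congr nth_opt; apply: eq_filter => i.
  by rewrite (nbpred _ _ (fun z => z == lf v) hk) (nbpred _ _ (fun z => z == lf v) (leqnn _)).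
case: ifP => // _; congr nth_opt; apply: eq_filter => i.
by rewrite (nbpred _ _ (fun z => _ < z) hk) (nbpred _ _ (fun z => _ < z) (leqnn _)).
Qed.

Lemma msg_isnb k v i : isSome (msg k v i) = isnb v i.
Proof.
rewrite /msg /isnb; case: pickP => [u h|H] /=.
  by apply/esym/existsP; exists u.
by apply/esym/negbTE/existsPn => u; rewrite H.
Qed.

Definition K s := P1 + 2 * s.

Lemma scol_step t M : scol (stepf t M) =
  if cnt t < P1 then scol t
  else if odd (cnt t - P1) then copy t M else choose ((cnt t - P1)./2) t M.
Proof. by []. Qed.

Lemma col_pre k v i : k <= P1 -> scol (S k v) i = None.
Proof.
elim: k => [|k IH] // hk.
by rewrite runS scol_step cnt_run hk IH // ltnW.
Qed.

Lemma col_choose s v : scol (S (K s).+1 v) = choose s (S (K s) v) (msg (K s) v).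
Proof.
rewrite runS scol_step cnt_run /K (_ : (P1 + 2 * s < P1) = false); last by apply/negbTE; lia.
by rewrite addKn mul2n odd_double doubleK.
Qed.

Lemma col_copy s v : scol (S (K s).+2 v) = copy (S (K s).+1 v) (msg (K s).+1 v).
Proof.
rewrite runS scol_step cnt_run /K (_ : ((P1 + 2 * s).+1 < P1) = false); last by apply/negbTE; lia.
by rewrite -addnS addKn /= mul2n odd_double.
Qed.

Definition C s v i := scol (S (K s) v) i.
Definition C1 s v i := scol (S (K s).+1 v) i.
Definition fresh s v u := (TG s u == Some (id v)) && (C s v (id u) == None).

Definition Inv s := [/\
  (forall v i, C s v i != None -> isnb v i),
  (forall v u, e v u -> C s v (id u) = C s u (id v)),
  (forall v u, e v u -> (C s v (id u) != None) <->
      exists s', s' < s /\ (TG s' v = Some (id u) \/ TG s' u = Some (id v))),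
  (forall v u w x, e v u -> e v w -> u != w -> C s v (id u) = Some x -> C s v (id w) != Some x) &
  (forall v i x, C s v i = Some x -> x <= Delta + dd)].

Lemma Inv0 : Inv 0.
Proof.
have z : forall v i, C 0 v i = None by move=> v i; rewrite /C col_pre // /K addn0.
split.
- by move=> v i; rewrite z.
- by move=> v u _; rewrite !z.
- move=> v u _; rewrite z; split => // -[s' [//]].
- by move=> v u w x _ _ _; rewrite z.
- by move=> v i x; rewrite z.
Qed.

Lemma tails_mem s v i : i \in tails s (S (K s) v) (msg (K s) v) =
  [exists u, (e v u && fresh s v u) && (id u == i)].
Proof.
rewrite mem_filter mem_iota leq0n add0n /=.
case E: (msg (K s) v i) => [t|] /=.
  have [u [evu ei ->]] := msg_some E.
  rewrite (tgt_post s u (leq_addr _ _)) sid_run -ei idb andbT.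
  apply/idP/existsP.
    by move=> h; exists u; rewrite evu eqxx andbT.
  move=> [u' /andP [/andP [evu' fr] /eqP ei']].
  by move: fr; rewrite (idinj ei').
apply/esym/negbTE/existsPn => u; apply/negP => /andP [/andP [evu _] /eqP ei].
by move: (msg_none E evu); rewrite ei eqxx.
Qed.

Lemma tails_uniq s v : uniq (tails s (S (K s) v) (msg (K s) v)).
Proof. apply: filter_uniq; exact: iota_uniq. Qed.

Lemma tails_lt s v j : j \in tails s (S (K s) v) (msg (K s) v) -> j < NN.
Proof. by rewrite mem_filter mem_iota add0n => /andP [_ /andP [_ h]]. Qed.

Section Step.
Variable s : nat.
Hypothesis Hinv : Inv s.

Lemma L1 v i : ~~ [exists u, (e v u && fresh s v u) && (id u == i)] -> C1 s v i = C s v i.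
Proof.
move=> h; rewrite /C1 col_choose /choose.
have [F1 _ _] := fold_spec (gof (msg (K s) v)) (scol (S (K s) v)) (tails_uniq s v) (@tails_lt s v).
by rewrite F1 // tails_mem.
Qed.

Lemma L1' v u : e v u -> ~~ fresh s v u -> C1 s v (id u) = C s v (id u).
Proof.
move=> evu nf; apply: L1; apply/existsPn => u'; apply/negP => /andP [/andP [_ fr] /eqP /idinj E].
by move: nf; rewrite -E fr.
Qed.

Lemma count_deg v : count (fun i => isnb v i) (iota 0 NN) <= Delta.
Proof.
rewrite count_ids -mdeg /maxdeg; have := @leq_bigmax_cond _ xpredT (fun w => deg e w) v isT; by [].
Qed.

Lemma tail_bound v u : e v u -> fresh s v u -> size (usedc (C s u)) <= dd.
Proof.
move=> evu /andP [/eqP tg _].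
have [Ia _ Ic _ _] := Hinv.
rewrite /usedc size_pmap; apply: leq_trans (updeg u).
rewrite -count_ids; apply: sub_count => i /= h.
have : C s u i != None by move: h; case: (C s u i).
move=> /Ia /existsP [w /andP [euw /eqP iw]].
have hnz : C s u (id w) != None by rewrite iw; move: h; case: (C s u i).
have [s' [ss hs]] := (Ic u w euw).1 hnz.
apply/existsP; exists w; rewrite euw iw eqxx andbT /=.
exact: (timing tg ss euw hs).
Qed.

Lemma L2 v u : e v u -> fresh s v u -> exists x, [/\ C1 s v (id u) = Some x,
  x \notin usedc (C s u), x <= Delta + dd &
  forall j, j < NN -> j != id u -> C1 s v j != Some x].
Proof.
move=> evu fr.
have [Ia _ _ _ _] := Hinv.
have [F1 F0 F2] := fold_spec (gof (msg (K s) v)) (scol (S (K s) v)) (tails_uniq s v) (@tails_lt s v).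
have ut : id u \in tails s (S (K s) v) (msg (K s) v).
  by rewrite tails_mem; apply/existsP; exists u; rewrite evu fr eqxx.
have [x [E1 E2 E3 E4]] := F2 _ ut.
have g : gof (msg (K s) v) (id u) = usedc (C s u) by rewrite /gof msg_nb.
rewrite g in E2 E3.
exists x; rewrite /C1 col_choose; split => //.
apply: (leq_trans E3); apply: leq_add; last by apply: tail_bound evu fr.
apply: leq_trans (count_deg v); apply: sub_count => i /= h.
case: (boolP (i \in tails s (S (K s) v) (msg (K s) v))) => hi.
  move: hi; rewrite tails_mem => /existsP [w /andP [/andP [evw _] iw]].
  by apply/existsP; exists w; rewrite evw iw.
apply: Ia; by move: h; rewrite F1.
Qed.

Lemma Csucc v i : C s.+1 v i = match C1 s v i with Some x => Some x
  | None => if msg (K s).+1 v i is Some t then scol t (id v) else None end.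
Proof.
rewrite /C (_ : K s.+1 = (K s).+2); last by rewrite /K; lia.
by rewrite col_copy /copy sid_run.
Qed.

Lemma L4 v i : ~~ isnb v i -> C s.+1 v i = None.
Proof.
move=> h; have [Ia _ _ _ _] := Hinv.
rewrite Csucc.
have -> : msg (K s).+1 v i = None.
  case E: (msg _ v i) => [t|] //; by move: h; rewrite -(msg_isnb (K s).+1) E.
rewrite L1.
  case E: (C s v i) => [x|] //; by move: h; rewrite (Ia v i) // E.
apply/existsPn => u; apply/negP => /andP [/andP [evu _] iu].
by move: h; rewrite /isnb; move/existsPn/(_ u); rewrite evu iu.
Qed.

Lemma L3 v u : e v u -> C s.+1 v (id u) =
  if fresh s v u then C1 s v (id u) else if fresh s u v then C1 s u (id v)
  else C s v (id u).
Proof.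
move=> evu; have [_ Ib _ _ _] := Hinv.
have euv : e u v by case: se => sy _; rewrite sy.
rewrite Csucc msg_nb //.
case fv: (fresh s v u).
  by have [x [-> _ _ _]] := L2 evu fv.
rewrite (L1' evu (negbT fv)).
case fu: (fresh s u v).
  by move: fu => /andP [_ /eqP]; rewrite -/(C s u (id v)) -Ib // => ->.
rewrite -/(C1 s u (id v)) (L1' euv (negbT fu)) -Ib //.
by case: (C s u (id v)).
Qed.

Lemma nofresh2 v u : fresh s v u -> fresh s u v = false.
Proof.
move=> /andP [/eqP tg _]; have := D1 tg => tv.
by rewrite /fresh tv.
Qed.

Lemma Inv_step : Inv s.+1.
Proof.
have [Ia Ib Ic Id Ie] := Hinv.
split.
- move=> v i; case: (boolP (isnb v i)) => // h; by rewrite L4.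
- move=> v u evu.
  have euv : e u v by case: se => sy _; rewrite sy.
  rewrite (L3 evu) (L3 euv).
  case fv: (fresh s v u); first by rewrite (nofresh2 fv).
  case fu: (fresh s u v) => //; exact: Ib.
- move=> v u evu.
  have euv : e u v by case: se => sy _; rewrite sy.
  rewrite (L3 evu).
  case fv: (fresh s v u).
    have [x [-> _ _ _]] := L2 evu fv; split => // _.
    by exists s; split => //; right; move: fv => /andP [/eqP -> _].
  case fu: (fresh s u v).
    have [x [-> _ _ _]] := L2 euv fu; split => // _.
    by exists s; split => //; left; move: fu => /andP [/eqP -> _].
  split.
    move=> /(Ic v u evu).1 [s' [ss h]]; exists s'; split => //; exact: ltnW.
  move=> [s' [ss h]].
  move: ss; rewrite ltnS leq_eqVlt => /orP [/eqP es|ss]; last by apply/(Ic v u evu).2; exists s'.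
  subst s'; case: h => h.
    move: fu; rewrite /fresh h eqxx /= => /negbT; rewrite -Ib //.
  by move: fv; rewrite /fresh h eqxx /= => /negbT.
- have Hfr : forall v u w x, e v u -> e v w -> u != w -> fresh s v u || fresh s u v ->
      C s.+1 v (id u) = Some x -> C s.+1 v (id w) != Some x.
    move=> v u w x evu evw uw.
    have euv : e u v by case: se => sy _; rewrite sy.
    have ew : id w != id u by apply/eqP => /idinj E; move: uw; rewrite E eqxx.
    case fv: (fresh s v u) => /=.
      move=> _; have [x' [E1 _ _ Dx]] := L2 evu fv.
      rewrite (L3 evu) fv E1 => -[<-].
      rewrite (L3 evw).
      case fw: (fresh s v w); first by apply: Dx => //; exact: idb.
      case fw': (fresh s w v).
        move: fw' fv => /andP [/eqP tv _] /andP [/eqP tu _].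
        by move: (D1 tu); rewrite tv.
      rewrite -(L1' evw (negbT fw)); apply: Dx => //; exact: idb.
    move=> fu; have [x' [E1 nin _ _]] := L2 euv fu.
    rewrite (L3 evu) fv fu E1 => -[<-].
    rewrite (L3 evw).
    case fw: (fresh s v w).
      move: fw fu => /andP [/eqP tw _] /andP [/eqP tv _].
      by move: (D1 tw); rewrite tv.
    case fw': (fresh s w v).
      move: fw' fu => /andP [/eqP tv _] /andP [/eqP tv' _].
      by move: tv; rewrite tv' => -[/idinj E]; move: uw; rewrite E eqxx.
    apply/eqP => E; move: nin; rewrite /usedc mem_pmap; apply/negP/negPn.
    by apply/mapP; exists (id w); rewrite ?mem_iota ?add0n ?idb // E.
  move=> v u w x evu evw uw hu.
  case h1: (fresh s v u || fresh s u v); first by apply: Hfr h1 hu.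
  case h2: (fresh s v w || fresh s w v).
    apply/eqP => hw; have := Hfr v w u x evw evu; rewrite eq_sym uw h2 hw => /(_ isT isT erefl).
    by rewrite hu eqxx.
  move: h1 h2 hu; rewrite (L3 evu) (L3 evw).
  case: (fresh s v u); case: (fresh s u v) => //=.
  case: (fresh s v w); case: (fresh s w v) => //= _ _.
  exact: Id.
- move=> v i x.
  case: (boolP (isnb v i)) => [/existsP [u /andP [evu /eqP <-]]|h]; last by rewrite L4.
  have euv : e u v by case: se => sy _; rewrite sy.
  rewrite (L3 evu).
  case fv: (fresh s v u).
    by have [x' [-> _ b _]] := L2 evu fv; move=> [<-].
  case fu: (fresh s u v).
    by have [x' [-> _ b _]] := L2 euv fu; move=> [<-].
  exact: Ie.
Qed.

End Step.

Lemma Inv_all s : Inv s.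
Proof. elim: s => [|s IH]; [exact: Inv0 | exact: Inv_step]. Qed.

Lemma final_proper : proper_edge_coloring e (edge_col Alg e id Rtot) (Delta + dd).+1.
Proof.
have [Ia Ib Ic Id Ie] := Inv_all Stot.
have ecE : forall v u, edge_col Alg e id Rtot v u =
   (if C Stot v (id u) is Some x then x else 0) by [].
have some : forall v u, e v u -> exists x, C Stot v (id u) = Some x.
  move=> v u evu; have [s [ss h]] := cover evu.
  have : C Stot v (id u) != None by apply/(Ic v u evu).2; exists s.
  by case: (C Stot v (id u)) => // x _; exists x.
split.
- by move=> u v euv; rewrite !ecE Ib.
- move=> u v euv; rewrite ecE; have [x E] := some _ _ euv; rewrite E ltnS.
  exact: Ie E.
- move=> u v w euv euw vw; rewrite !ecE.
  have [x Ex] := some _ _ euv; have [y Ey] := some _ _ euw; rewrite Ex Ey.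
  apply/eqP => xy; subst y.
  by move: (Id _ _ _ _ euv euw vw Ex); rewrite Ey eqxx.
Qed.

End Algo.


Lemma proper_weaken n (e : rel 'I_n) col q q' : q <= q' ->
  proper_edge_coloring e col q -> proper_edge_coloring e col q'.
Proof. move=> h [h1 h2 h3]; split => // u v euv; exact: leq_trans (h2 _ _ euv) h. Qed.

Theorem mainTheorem12 :
  forall c : nat, exists C : nat, forall n Delta a : nat,
    exists (A : LocalAlg) (R : nat),
      R <= C * (a * trunc_log 2 n) /\
      forall (e : rel 'I_n) (id : 'I_n -> nat),
        simple_graph e -> injective id -> (forall v, id v < n ^ c) ->
        maxdeg e = Delta -> arboricity e a ->
        proper_edge_coloring e (edge_col A e id R) (Delta + C * a).
Proof.
move=> c; exists (16 * c + 20) => n Delta a.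
case: (boolP ((0 < a) && (1 < n))) => [/andP [apos n2]|H].
  exists (Alg n a c), (Rtot n a c); split.
    have := trunc_log_ltn n (isT : 1 < 2).
    rewrite /Rtot /P1 /Stot /BB /dd /LL.
    move: (trunc_log 2 n) => lg hl.
    have lg1 : 1 <= lg by case: lg hl => //; rewrite expn1; lia.
    nia.
  move=> e id se inj idb md [fd _].
  apply: proper_weaken (final_proper se inj idb md fd apos).
  rewrite /dd; nia.
exists (Alg n a c), 0; split => // e id se _ _ _ [[f [hf _]] _].
have noe : forall u v, e u v -> False.
  move=> u v euv; move: H; rewrite negb_and -!leqNgt => /orP [a0|n1].
    by have [_] := hf _ _ euv; move: a0; rewrite leqn0 => /eqP ->.
  have uv : u = v by apply: ord_inj; move: (ltn_ord u) (ltn_ord v) n1; move: (nat_of_ord u) (nat_of_ord v) => x y; lia.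
  by move: euv; rewrite uv; case: se => _ ->.
by split => u v; [move/noe | move/noe | move=> w /noe].
Qed.
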